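(* Let $x\in\{\text{complete},\text{preferred},\text{semi-stable},\text{stage},\text{stage2},\text{CF2},\text{grounded},\text{ideal},\text{eager}\}$. For every two argumentation frameworks $AF=(AR,Attacks)$ and $AF'=(AR',Attacks')$ such that $AF\preceq_{RM}AF'$: $$\forall E\in\sigma_x(AF)\ \exists E'\in\sigma_x(AF') \text{ such that } (E'\not\subseteq AR\ \lor\ E'=E).$$
   Context: An argumentation framework is a pair $AF=(AR,Attacks)$ with $AR$ finite and $Attacks\subseteq AR\times AR$; $a$ attacks $b$ iff $(a,b)\in Attacks$; $S$ attacks $b$ iff some element of $S$ attacks $b$. $AF\preceq_N AF'$ (normal expansion) iff $AR\subseteq AR'$, $Attacks\subseteq Attacks'$ and no $(a,b)\in Attacks'\setminus Attacks$ has $a,b\in AR$. Attack sequence: $\langle a_1,\dots,a_n\rangle$ of pairwise distinct arguments with $(a_i,a_{i+1})\in Attacks$; $b$ is reachable from $a$ iff such a sequence has $a_1=a,a_n=b$. An attack cycle is a sequence $\langle a_1,\dots,a_n\rangle$ with $(a_i,a_{i+1})\in Attacks$ for $1\le i\le n-1$, $a_1=a_n$, and $a_1,\dots,a_{n-1}$ pairwise distinct; $\mathcal C(AF)$ is the set of attack cycles of $AF$. $AF\preceq_{RM}AF'$ (rational man's expansion) iff (1) $AF\preceq_N AF'$; (2) $\mathcal C(AF')=\mathcal C(AF)$; (3) for all $a\in AR$ and $b\in AR'\setminus AR$ such that $b$ is reachable from $a$ in $AF'$, $a$ occurs in no attack cycle of $AF'$. Semantics: $S$ is conflict-free iff no element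 of $S$ attacks an element of $S$; $a$ is acceptable w.r.t. $S$ iff every attacker of $a$ is attacked by $S$; a conflict-free $S$ is admissible iff all its elements are acceptable w.r.t. $S$; $S^+=\{b:\text{some }a\in S\text{ attacks }b\}$. Among admissible sets: complete = contains every argument acceptable w.r.t. it; preferred = $\subseteq$-maximal admissible; grounded = $\subseteq$-minimal complete; ideal = $\subseteq$-maximal admissible set contained in every preferred extension; semi-stable = complete with $\subseteq$-maximal $S\cup S^+$ among complete extensions; eager = $\subseteq$-maximal admissible set contained in every semi-stable extension. Naive = $\subseteq$-maximal conflict-free; stage = conflict-free $S$ with no conflict-free $S'$ such that $S'\cup S'^+\supsetneq S\cup S^+$. SCCs: maximal sets of mutually reachable arguments ($SCCS_{AF}$); $AF\downarrow_S=(S,Attacks\cap(S\times S))$; for SCC $S$ and $E\subseteq AR$: $S^-_{out}=\{a\notin S: a\text{ attacks some element of }S\}$, $D_{AF}(S,E)=\{a\in S: E\cap S^-_{out}\text{ attacks }a\}$, $UP_{AF}(S,E)=S\setminus D_{AF}(S,E)$. CF2 (resp. stage2): $E$ is an extension of $AF$ iff either $|SCCS_{AF}|=1$ and $E$ is naive (resp. stage), or for every $S\in SCCS_{AF}$, $E\cap S$ is a CF2 (resp. stage2) extension of $AF\downarrow_{UP_{AF}(S,E)}$. $\sigma_x(AF)$ is the set of all $x$-extensions of $AF$. *)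

(* Defs.v *)
(* Arguments live in a common finite universe type T;
   an argumentation framework is a finite set of arguments plus a set of
   attack pairs (well-formedness: attacks are between arguments). *)
From mathcomp Require Import all_boot.
Set Implicit Arguments. Unset Strict Implicit. Unset Printing Implicit Defensive.

Section AFDefs.
Variable T : finType.

Record AF := mkAF { args : {set T}; atts : {set T * T} }.

Definition wf_AF (F : AF) : Prop := atts F \subset setX (args F) (args F).

Definition attacks (F : AF) (a b : T) : bool := (a, b) \in atts F.

Definition normal_exp (F F' : AF) : Prop :=
  args F \subset args F' /\ atts F \subset atts F' /\
  (forall a b, (a, b) \in atts F' -> (a, b) \notin atts F ->
     ~ (a \in args F /\ b \in args F)).

Definition attack_seq (F : AF) (s : seq T) : Prop :=
  match s with
  | [::] => False
  | a :: r => [/\ uniq s, all (fun x => x \in args F) s & path (attacks F) a r]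
  end.

Definition reachable (F : AF) (a b : T) : Prop :=
  exists r, attack_seq F (a :: r) /\ last a r = b.

Definition is_cycle (F : AF) (s : seq T) : Prop :=
  match s with
  | [::] => False
  | a :: r => [/\ r != [::], last a r = a, path (attacks F) a r,
               uniq (belast a r) & all (fun x => x \in args F) s]
  end.

Definition same_cycles (F F' : AF) : Prop :=
  forall s, is_cycle F s <-> is_cycle F' s.

Definition in_some_cycle (F : AF) (a : T) : Prop :=
  exists s, is_cycle F s /\ a \in s.

Definition rm_exp (F F' : AF) : Prop :=
  [/\ normal_exp F F', same_cycles F F' &
      forall a b, a \in args F -> b \in args F' :\: args F ->
        reachable F' a b -> ~ in_some_cycle F' a].

Definition splus (F : AF) (S : {set T}) : {set T} :=
  [set b | [exists a in S, attacks F a b]].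

Definition range (F : AF) (S : {set T}) : {set T} := S :|: splus F S.

Definition conflict_free (F : AF) (S : {set T}) : Prop :=
  S \subset args F /\ forall a b, a \in S -> b \in S -> ~~ attacks F a b.

Definition acceptable (F : AF) (a : T) (S : {set T}) : Prop :=
  forall b, attacks F b a -> exists2 c, c \in S & attacks F c b.

Definition admissible (F : AF) (S : {set T}) : Prop :=
  conflict_free F S /\ forall a, a \in S -> acceptable F a S.

Definition complete (F : AF) (S : {set T}) : Prop :=
  admissible F S /\ forall a, a \in args F -> acceptable F a S -> a \in S.

Definition preferred (F : AF) (S : {set T}) : Prop :=
  admissible F S /\ forall S' : {set T}, admissible F S' -> S \subset S' -> S' = S.

Definition grounded (F : AF) (S : {set T}) : Prop :=
  complete F S /\ forall S' : {set T}, complete F S' -> S' \subset S -> S' = S.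

Definition ideal (F : AF) (S : {set T}) : Prop :=
  [/\ admissible F S, (forall P : {set T}, preferred F P -> S \subset P) &
      forall S' : {set T}, admissible F S' -> (forall P : {set T}, preferred F P -> S' \subset P) ->
        S \subset S' -> S' = S].

Definition semi_stable (F : AF) (S : {set T}) : Prop :=
  complete F S /\ forall S' : {set T}, complete F S' ->
    range F S \subset range F S' -> range F S' = range F S.

Definition eager (F : AF) (S : {set T}) : Prop :=
  [/\ admissible F S, (forall P : {set T}, semi_stable F P -> S \subset P) &
      forall S' : {set T}, admissible F S' -> (forall P : {set T}, semi_stable F P -> S' \subset P) ->
        S \subset S' -> S' = S].

Definition naive (F : AF) (S : {set T}) : Prop :=
  conflict_free F S /\ forall S' : {set T}, conflict_free F S' -> S \subset S' -> S' = S.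

Definition stage (F : AF) (S : {set T}) : Prop :=
  conflict_free F S /\
  ~ (exists S' : {set T}, conflict_free F S' /\ range F S \proper range F S').

Definition restrict (F : AF) (S : {set T}) : AF :=
  mkAF S [set p in atts F | (p.1 \in S) && (p.2 \in S)].

Definition mutually_reachable (F : AF) (S : {set T}) : Prop :=
  forall a b, a \in S -> b \in S -> reachable F a b.

Definition is_scc (F : AF) (S : {set T}) : Prop :=
  [/\ S != set0, S \subset args F, mutually_reachable F S &
      forall S' : {set T}, S \subset S' -> S' \subset args F -> mutually_reachable F S' -> S' = S].

Definition single_scc (F : AF) : Prop :=
  exists S : {set T}, is_scc F S /\ forall S' : {set T}, is_scc F S' -> S' = S.

Definition out_attackers (F : AF) (S : {set T}) : {set T} :=
  [set a in args F | (a \notin S) && [exists b in S, attacks F a b]].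

Definition Dset (F : AF) (S E : {set T}) : {set T} :=
  [set a in S | [exists c in E :&: out_attackers F S, attacks F c a]].

Definition UPset (F : AF) (S E : {set T}) : {set T} := S :\: Dset F S E.

(* fuel-based unfolding of the (well-founded) SCC recursion: each recursive
   call is on a strict subset of the arguments, so fuel #|AR|+1 suffices *)
Fixpoint scc_rec (base : AF -> {set T} -> Prop) (n : nat) (F : AF) (E : {set T})
  : Prop :=
  match n with
  | 0 => False
  | n'.+1 =>
      E \subset args F /\
      ((single_scc F /\ base F E) \/
       (~ single_scc F /\
        forall S : {set T}, is_scc F S -> scc_rec base n' (restrict F (UPset F S E)) (E :&: S)))
  end.

Definition cf2 (F : AF) (E : {set T}) : Prop := scc_rec naive #|args F|.+1 F E.
Definition stage2 (F : AF) (E : {set T}) : Prop := scc_rec stage #|args F|.+1 F E.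

End AFDefs.

Inductive semantics :=
  Complete | Preferred | SemiStable | Stage | Stage2 | CF2 | Grounded | Ideal | Eager.

Definition sigma (T : finType) (x : semantics) : AF T -> {set T} -> Prop :=
  match x with
  | Complete => @complete T
  | Preferred => @preferred T
  | SemiStable => @semi_stable T
  | Stage => @stage T
  | Stage2 => @stage2 T
  | CF2 => @cf2 T
  | Grounded => @grounded T
  | Ideal => @ideal T
  | Eager => @eager T
  end.

(* Main.v *)
Require Import Defs.
From mathcomp Require Import all_boot.
From Stdlib Require Import Classical IndefiniteDescription.
From mathcomp Require Import zify.
Set Implicit Arguments. Unset Strict Implicit. Unset Printing Implicit Defensive.

Section Gen.
Variable T : finType.
Implicit Types (G H : AF T) (S X Y : {set T}) (a b c x y z : T).

Lemma max_gen (P : {set T} -> Prop) (f : {set T} -> {set T}) S0 :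
  P S0 -> exists S, [/\ P S, f S0 \subset f S &
     forall S', P S' -> f S \subset f S' -> f S' = f S].
Proof.
suff H: forall n S0, #|T| - #|f S0| < n -> P S0 -> exists S, [/\ P S, f S0 \subset f S &
     forall S', P S' -> f S \subset f S' -> f S' = f S].
  by apply: (H (#|T| - #|f S0|).+1).
elim=> [//|n IH] {}S0 Hn HP.
case: (classic (exists S', [/\ P S', f S0 \subset f S' & f S' <> f S0])).
  move=> [S' [HP' Hsub Hne]].
  have Hlt: #|f S0| < #|f S'|.
    apply: proper_card; rewrite properEneq Hsub andbT; apply/eqP => E; by apply: Hne.
  have Hle: #|f S'| <= #|T| by apply: max_card.
  have Hn' : #|T| - #|f S'| < n by lia.
  have [S [H1 H2 H3]] := IH S' Hn' HP'.
  by exists S; split => //; apply: subset_trans H2.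
move=> Hno; exists S0; split => // S' HP' Hs.
by apply: NNPP => Hne; apply: Hno; exists S'.
Qed.

Definition edge G : rel T := fun x y => attacks G x y && (x \in args G) && (y \in args G).
Definition reachb G a b := (a \in args G) && connect (edge G) a b.

Lemma path_edge_args G a p : path (edge G) a p -> all (fun x => x \in args G) p.
Proof. by elim: p a => //= y p IH a /andP[/andP[/andP[_ _] ->] /IH]. Qed.

Lemma path_edge_att G a p : path (edge G) a p -> path (attacks G) a p.
Proof. by apply: sub_path => u v /andP[/andP[]]. Qed.

Lemma path_att_edge G a p : a \in args G -> all (fun x => x \in args G) p ->
  path (attacks G) a p -> path (edge G) a p.
Proof.
elim: p a => //= y p IH a Ha /andP[Hy Hp] /andP[Hay Hpp].
by rewrite /edge Hay Ha Hy /=; apply: IH.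
Qed.

Lemma reachP G a b : reachable G a b <-> reachb G a b.
Proof.
split.
  move=> [r [[Hu Hall Hp] Hl]]; move: Hall => /= /andP[Ha Hall].
  rewrite /reachb Ha; apply/connectP; exists r => //.
  by apply: path_att_edge.
move=> /andP[Ha /connectP[p Hp ->]].
case: (shortenP Hp) => p' Hp' Hu _.
exists p'; split => //; split => //=.
  by rewrite Ha (path_edge_args Hp').
by apply: path_edge_att.
Qed.

Lemma reach_refl G a : a \in args G -> reachb G a a.
Proof. by move=> Ha; rewrite /reachb Ha connect0. Qed.

Lemma reach_trans G a b c : reachb G a b -> reachb G b c -> reachb G a c.
Proof.
move=> /andP[Ha Hab] /andP[_ Hbc]; rewrite /reachb Ha /=.
by apply: connect_trans Hab Hbc.
Qed.

Lemma reach_args G a b : reachb G a b -> b \in args G.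
Proof.
move=> /andP[Ha /connectP[p Hp ->]].
have := path_edge_args Hp.
have : last a p \in a :: p by apply: mem_last.
rewrite inE => /orP[/eqP -> //|Hin] /allP; by apply.
Qed.

Lemma reach_step G a b c : reachb G a b -> attacks G b c -> b \in args G -> c \in args G ->
  reachb G a c.
Proof.
move=> Hab Hbc Hb Hc; apply: reach_trans Hab _.
by rewrite /reachb Hb /=; apply: connect1; rewrite /edge Hbc Hb Hc.
Qed.

Lemma cyc1 G y w : reachb G y w -> attacks G w y -> in_some_cycle G y.
Proof.
move=> /andP[Hy /connectP[p Hp Hw]]; move: Hw => ->.
case: (shortenP Hp) => p' Hp' Hu _ Hatt.
exists (y :: rcons p' y); split; last by rewrite mem_head.
rewrite /is_cycle; split.
- by case: p' {Hp' Hu Hatt}.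
- by rewrite last_rcons.
- by rewrite rcons_path (path_edge_att Hp') Hatt.
- by rewrite belast_rcons.
- by rewrite /= Hy all_rcons Hy (path_edge_args Hp').
Qed.

Lemma cyc2 G a z : reachb G a z -> reachb G z a -> a != z -> in_some_cycle G a.
Proof.
move=> Haz /andP[Hz /connectP[q Hq Hl]] Hne.
case/lastP: q Hq Hl => [|q' a'] Hq Hl.
  by move: Hne; rewrite Hl /= eqxx.
move: Hq; rewrite last_rcons in Hl; subst a'.
rewrite rcons_path => /andP[Hq' He].
apply: (@cyc1 G a (last z q')); last by move: He => /andP[/andP[]].
apply: reach_trans Haz _.
rewrite /reachb Hz /=; apply: (path_connect Hq'); exact: mem_last.
Qed.

Definition mr G a b := reachb G a b && reachb G b a.
Definition scc_of G a := [set z in args G | mr G a z].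

Lemma mutualP G S : mutually_reachable G S <-> forall a b, a \in S -> b \in S -> reachb G a b.
Proof. by split => H a b Ha Hb; apply/reachP; apply: H. Qed.

Lemma is_scc_of G a : a \in args G -> is_scc G (scc_of G a).
Proof.
move=> Ha; split.
- by apply/set0Pn; exists a; rewrite inE Ha /mr reach_refl.
- by apply/subsetP => z; rewrite inE => /andP[].
- apply/mutualP => u v; rewrite !inE => /andP[_ /andP[_ Hu]] /andP[_ /andP[Hv _]].
  by apply: reach_trans Hu Hv.
move=> S' Hs Hs' /mutualP Hm; apply/setP => z; apply/idP/idP => Hz; last by apply: (subsetP Hs).
have Haa : a \in S' by apply: (subsetP Hs); rewrite inE Ha /mr reach_refl.
by rewrite inE (subsetP Hs' _ Hz) /mr !Hm.
Qed.

Lemma scc_eq G S a : is_scc G S -> a \in S -> S = scc_of G a.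
Proof.
move=> [Hne Hsub /mutualP Hm Hmax] Ha.
have Ha' : a \in args G by apply: (subsetP Hsub).
apply/esym/Hmax.
- by apply/subsetP => z Hz; rewrite inE (subsetP Hsub _ Hz) /mr !Hm.
- by apply/subsetP => z; rewrite inE => /andP[].
apply/mutualP => u v; rewrite !inE => /andP[_ /andP[_ Hu]] /andP[_ /andP[Hv _]].
by apply: reach_trans Hu Hv.
Qed.

Lemma scc_mem G S : is_scc G S -> exists a, a \in S.
Proof. by move=> [/set0Pn [a Ha] _ _ _]; exists a. Qed.

Lemma scc_rec_mono base n m G E : n <= m -> scc_rec base n G E -> scc_rec base m G E.
Proof.
elim: n m G E => [|n IH] [|m] G E //= Hnm [Hsub [H|[Hns H]]]; split => //; first by left.
by right; split => // S HS; apply: IH (H S HS).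
Qed.

End Gen.

Section Sem.
Variable T : finType.
Implicit Types (G H : AF T) (S X Y A B P W : {set T}) (a b c x y z : T).

Lemma cf_sub G A B : conflict_free G A -> B \subset A -> conflict_free G B.
Proof.
move=> [Hs Hc] Hb; split; first by apply: subset_trans Hb Hs.
by move=> u v Hu Hv; apply: Hc; apply: (subsetP Hb).
Qed.

Lemma acc_mono G a A B : acceptable G a A -> A \subset B -> acceptable G a B.
Proof. by move=> H Hs u Hu; have [c Hc Hc'] := H u Hu; exists c => //; apply: (subsetP Hs). Qed.

Lemma adm0 G : admissible G set0.
Proof. by split; [split; [apply: sub0set|move=> u v; rewrite inE]|move=> u; rewrite inE]. Qed.

Lemma adm_add G P a : admissible G P -> a \in args G -> acceptable G a P ->
  admissible G (a |: P).
Proof.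
move=> [[Hs Hc] Hacc] Ha Haa.
have Hno : forall u, u \in P -> ~~ attacks G u a.
  move=> u Hu; apply/negP => Hua; have [c Hc' Hcu] := Haa u Hua.
  have [d Hd Hdc] := Hacc u Hu c Hcu.
  by move: (Hc d c Hd Hc'); rewrite Hdc.
split; [split|].
- by rewrite subUset sub1set Ha Hs.
- move=> u v; rewrite !in_setU1 => /orP[/eqP->|Hu] /orP[/eqP->|Hv].
  + apply/negP => Haa'; have [c Hc' Hca] := Haa a Haa'.
    by move: (Hno c Hc'); rewrite Hca.
  + apply/negP => Hav; have [c Hc' Hca] := Hacc v Hv a Hav.
    by move: (Hno c Hc'); rewrite Hca.
  + by apply: Hno.
  + by apply: Hc.
- move=> u; rewrite in_setU1 => /orP[/eqP->|Hu]; [apply: acc_mono Haa _|apply: acc_mono (Hacc u Hu) _];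
  by apply: subsetUr.
Qed.

Lemma pref_complete G P : preferred G P -> complete G P.
Proof.
move=> [Had Hmax]; split => // a Ha Hacc.
have := Hmax _ (adm_add Had Ha Hacc) (subsetUr _ _).
by move=> <-; rewrite in_setU1 eqxx.
Qed.

Lemma pref_exists G : exists P, preferred G P.
Proof.
have [S [H1 _ H3]] := @max_gen T (admissible G) id set0 (adm0 G).
by exists S; split => // S' HS' Hsub; apply: H3.
Qed.

Lemma complete_exists G : exists P, complete G P.
Proof. by have [P HP] := pref_exists G; exists P; apply: pref_complete. Qed.

Lemma grounded_exists G C : complete G C -> exists P, grounded G P /\ P \subset C.
Proof.
move=> HC; have [S [H1 H2 H3]] := @max_gen T (complete G) (fun X => ~: X) C HC.
exists S; split; last by rewrite -setCS.
split => // S' HS' Hsub; apply: setC_inj; apply: H3 => //; by rewrite setCS.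
Qed.

Lemma ss_exists G C : complete G C -> exists P, semi_stable G P.
Proof.
move=> HC; have [S [H1 H2 H3]] := @max_gen T (complete G) (range G) C HC.
by exists S; split.
Qed.

Lemma stage_exists G : exists P, stage G P.
Proof.
have Hcf0 : conflict_free G set0 by case: (adm0 G).
have [S [H1 H2 H3]] := @max_gen T (conflict_free G) (range G) set0 Hcf0.
exists S; split => // [[S' [HS' Hp]]].
move: Hp; rewrite properEneq => /andP[/eqP Hne Hs]; apply: Hne; apply/esym; by apply: H3.
Qed.

Lemma naive_exists G : exists P, naive G P.
Proof.
have Hcf0 : conflict_free G set0 by case: (adm0 G).
have [S [H1 H2 H3]] := @max_gen T (conflict_free G) id set0 Hcf0.
by exists S; split => // S' HS' Hs; apply: H3.
Qed.

Definition idealQ G (Q : {set T} -> Prop) S := [/\ admissible G S, (forall P, Q P -> S \subset P) &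
  forall S', admissible G S' -> (forall P, Q P -> S' \subset P) -> S \subset S' -> S' = S].

Lemma idealQ_exists G Q : exists S, idealQ G Q S.
Proof.
have H0 : admissible G set0 /\ (forall P, Q P -> set0 \subset P) by split; [apply: adm0|move=> P _; apply: sub0set].
have [S [[H1 H1'] H2 H3]] := @max_gen T (fun S => admissible G S /\ (forall P, Q P -> S \subset P)) id set0 H0.
by exists S; split => // S' HS' HS'' Hs; apply: H3.
Qed.

Lemma idealQ_contains G Q A0 I : (exists P, Q P) -> (forall P, Q P -> admissible G P) ->
  admissible G A0 -> (forall P, Q P -> A0 \subset P) -> idealQ G Q I -> A0 \subset I.
Proof.
move=> [P0 HP0] HQ [HA0c HA0a] HA0 [[HIc HIa] HI HImax].
have Hadm : admissible G (I :|: A0).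
  split.
    apply: cf_sub (proj1 (HQ _ HP0)) _; by rewrite subUset HI // HA0.
  move=> u; rewrite inE => /orP[Hu|Hu]; [apply: acc_mono (HIa u Hu) _|apply: acc_mono (HA0a u Hu) _].
    by apply: subsetUl. by apply: subsetUr.
have := HImax _ Hadm (fun P HP => ltac:(by rewrite subUset HI // HA0)) (subsetUl _ _).
by move=> <-; apply: subsetUr.
Qed.

Definition regW G (W : {set T}) (rk : T -> nat) := W \subset args G /\
  forall x y, x \in W -> attacks G y x -> y \in W /\ rk y < rk x.

Definition Lab G (W : {set T}) X := forall x, x \in W -> (x \in X <-> forall y, attacks G y x -> y \notin X).

Lemma rk_ind (W : {set T}) (rk : T -> nat) (Pr : T -> Prop) :
  (forall x, x \in W -> (forall y, y \in W -> rk y < rk x -> Pr y) -> Pr x) ->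
  forall x, x \in W -> Pr x.
Proof.
move=> IH x; move: {2}(rk x).+1 (ltnSn (rk x)) => n; elim: n x => [//|n IHn] x Hx Hw.
apply: IH => // y Hy Hlt; apply: IHn => //; by apply: leq_trans Hlt _.
Qed.

Lemma Lab_uniq G W rk X Y : regW G W rk -> Lab G W X -> Lab G W Y ->
  forall x, x \in W -> (x \in X) = (x \in Y).
Proof.
move=> [HW Hr] HX HY; apply: (rk_ind (rk := rk)) => x Hx IH.
apply/idP/idP => H.
  apply/(HY x Hx) => y Hy; have [Hyw Hlt] := Hr x y Hx Hy.
  by rewrite -(IH y Hyw Hlt); apply: (proj1 (HX x Hx)).
apply/(HX x Hx) => y Hy; have [Hyw Hlt] := Hr x y Hx Hy.
by rewrite (IH y Hyw Hlt); apply: (proj1 (HY x Hx)).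
Qed.

Lemma complete_Lab G W rk X : regW G W rk -> complete G X -> Lab G W X.
Proof.
move=> [HW Hr] [[[Hs Hc] Hacc] Hcomp].
apply: (rk_ind (rk := rk)) => x Hx IH; split.
  by move=> HxX y Hy; apply/negP => HyX; move: (Hc y x HyX HxX); rewrite Hy.
move=> Hno; apply: Hcomp; first by apply: (subsetP HW).
move=> y Hy; have [Hyw Hlt] := Hr x y Hx Hy.
have Hyn := Hno y Hy.
apply: NNPP => Hne; move: Hyn; rewrite (proj2 (IH y Hyw Hlt)) //.
by move=> z Hz; apply/negP => HzX; apply: Hne; exists z.
Qed.

Lemma cf_agree G W rk A B : regW G W rk -> conflict_free G A -> conflict_free G B ->
  (forall x, x \in W -> x \in A -> x \notin B -> exists2 y, y \in B & attacks G y x) ->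
  (forall x, x \in W -> x \in B -> x \notin A -> exists2 y, y \in A & attacks G y x) ->
  forall x, x \in W -> (x \in A) = (x \in B).
Proof.
move=> [HW Hr] [_ HcA] [_ HcB] HAB HBA; apply: (rk_ind (rk := rk)) => x Hx IH.
apply/idP/idP => H; apply: NNPP => /negP Hn.
  have [y Hy Hyx] := HAB x Hx H Hn; have [Hyw Hlt] := Hr x y Hx Hyx.
  have HyA : y \in A = false by apply/negP => HyA; move: (HcA y x HyA H); rewrite Hyx.
  by move: (IH y Hyw Hlt); rewrite HyA Hy.
have [y Hy Hyx] := HBA x Hx H Hn; have [Hyw Hlt] := Hr x y Hx Hyx.
have HyB : y \in B = false by apply/negP => HyB; move: (HcB y x HyB H); rewrite Hyx.
by move: (IH y Hyw Hlt); rewrite HyB Hy.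
Qed.

Lemma path_rk G W rk p a : regW G W rk -> path (edge G) a p -> last a p \in W ->
  a \in W /\ (p != [::] -> rk a < rk (last a p)).
Proof.
move=> [HW Hr]; elim: p a => [|y p IH] a //= /andP[/andP[/andP[Hay _] _] Hp] Hl.
have [Hy Hy'] := IH y Hp Hl.
have [Ha Hlt] := Hr y a Hy Hay.
split => // _; case: p Hp Hl Hy' {IH} => [|u p] //= _ _ H; by apply: ltn_trans Hlt (H isT).
Qed.

Lemma reach_rk G W rk a x : regW G W rk -> reachb G a x -> x \in W -> a != x ->
  a \in W /\ rk a < rk x.
Proof.
move=> Hreg /andP[_ /connectP[p Hp ->]] Hl Hne.
have [Ha H] := path_rk Hreg Hp Hl; split => //; apply: H.
by apply: contra Hne => /eqP Hp0; subst p.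
Qed.

Lemma W_acyc G W rk x z : regW G W rk -> x \in W -> mr G x z -> z = x.
Proof.
move=> Hreg Hx /andP[Hxz Hzx]; apply/eqP; apply: NNPP => /negP Hne.
have [Hz Hlt] := reach_rk Hreg Hzx Hx Hne.
have [_ Hlt'] := reach_rk Hreg Hxz Hz (ltac:(by rewrite eq_sym)).
by move: (ltn_trans Hlt Hlt'); rewrite ltnn.
Qed.

Lemma W_noself G W rk x : regW G W rk -> x \in W -> ~~ attacks G x x.
Proof.
move=> [_ Hr] Hx; apply/negP => H; have [_ Hlt] := Hr x x Hx H; by rewrite ltnn in Hlt.
Qed.

Lemma W_scc G W rk x : regW G W rk -> x \in W -> scc_of G x = [set x].
Proof.
move=> Hreg Hx; apply/setP => z; rewrite !inE; apply/idP/idP.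
  by move=> /andP[_ H]; rewrite (W_acyc Hreg Hx H).
move=> /eqP ->; have Hxa : x \in args G by apply: (subsetP (proj1 Hreg)).
by rewrite Hxa /mr reach_refl.
Qed.

Lemma single_one H x : args H = [set x] -> single_scc H.
Proof.
move=> Ha; have Hx : x \in args H by rewrite Ha set11.
exists (scc_of H x); split; first by apply: is_scc_of.
move=> S' HS'; have [a Ha'] := scc_mem HS'.
have Hsub : S' \subset args H by case: HS'.
have := subsetP Hsub a Ha'.
rewrite Ha inE => /eqP Hax; subst a; by apply: scc_eq.
Qed.

Lemma scc_rec_empty base n H : args H = set0 -> scc_rec base n.+1 H set0.
Proof.
move=> Ha; split; first by rewrite Ha.
right; split.
  move=> [S [[Hne Hs _ _] _]]; move: Hs; rewrite Ha subset0 => /eqP Hs; by rewrite Hs eqxx in Hne.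
move=> S [Hne Hs _ _]; move: Hs; rewrite Ha subset0 => /eqP Hs; by rewrite Hs eqxx in Hne.
Qed.

Definition base_ok (base : AF T -> {set T} -> Prop) :=
  (forall H x X, args H = [set x] -> ~~ attacks H x x -> base H X -> X = [set x]) /\
  (forall H, exists X, X \subset args H /\ base H X).

Lemma restrict_args G S : args (restrict G S) = S. Proof. by []. Qed.
Lemma restrict_att G S u v : attacks (restrict G S) u v = [&& attacks G u v, u \in S & v \in S].
Proof. by rewrite /attacks /restrict /= inE. Qed.

Lemma inUP G S E z : z \in UPset G S E <->
  z \in S /\ ~ (exists c, [/\ c \in E, c \in out_attackers G S & attacks G c z]).
Proof.
rewrite /UPset /Dset in_setD inE; split.
  move=> /andP[Hn Hz]; split => // [[c [H1 H2 H3]]]; move: Hn; rewrite Hz /=.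
  by move/negP; apply; apply/existsP; exists c; rewrite inE H1 H2 H3.
move=> [Hz Hn]; rewrite Hz andbT /=; apply/negP => /existsP [c].
by rewrite inE => /andP[/andP[H1 H2] H3]; apply: Hn; exists c.
Qed.

Lemma inOut G S c : c \in out_attackers G S <->
  [/\ c \in args G, c \notin S & exists2 b, b \in S & attacks G c b].
Proof.
rewrite /out_attackers inE; split.
  by move=> /andP[H1 /andP[H2 /existsP[b /andP[H3 H4]]]]; split => //; exists b.
by move=> [H1 H2 [b H3 H4]]; rewrite H1 H2 /=; apply/existsP; exists b; rewrite H3.
Qed.

Lemma scc_rec_Lab base G W rk n X : base_ok base -> regW G W rk -> scc_rec base n G X -> Lab G W X.
Proof.
move=> [Hb _] Hreg; case: n => [//|n] [HXs Hcase] x Hx.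
have Hxa : x \in args G by apply: (subsetP (proj1 Hreg)).
have Hns := W_noself Hreg Hx.
have Hsc := W_scc Hreg Hx.
case: Hcase => [[[S [HS Huniq]] HbX]|[Hns' Hall]].
  have Hargs : args G = [set x].
    apply/setP => z; apply/idP/idP; last by rewrite inE => /eqP ->.
    move=> Hz; have := Huniq _ (is_scc_of Hz); have := Huniq _ (is_scc_of Hxa).
    rewrite Hsc => -> Hz'; have : z \in scc_of G z by rewrite inE Hz /mr reach_refl.
    by rewrite Hz'.
  have HX := Hb _ _ _ Hargs Hns HbX; subst X; rewrite set11; split => // _ y Hy.
  rewrite inE; apply/negP => /eqP Hyx; subst y; by rewrite Hy in Hns.
have HS : is_scc G [set x] by rewrite -Hsc; apply: is_scc_of.
have := Hall _ HS.
case: (classic (exists2 c, c \in X & attacks G c x)) => [[c Hc Hcx]|Hno].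
  have HUP : UPset G [set x] X = set0.
    apply/setP => z; rewrite in_set0; apply/negP => /inUP [Hz Hn]; move: Hz; rewrite inE => /eqP Hzx; subst z.
    apply: Hn; exists c; split => //; apply/inOut; split.
    - apply: (subsetP (proj1 Hreg)); exact: (proj1 ((proj2 Hreg) x c Hx Hcx)).
    - rewrite inE; apply/negP => /eqP Hcx'; subst c; by rewrite Hcx in Hns.
    - by exists x; rewrite ?inE.
rewrite HUP; case: n {Hall} => [//|n] [Hsub _]; split.
    move=> HxX; move: (subsetP Hsub x); rewrite !inE HxX eqxx /=; by move=> /(_ isT).
  by move=> H; move: (H c Hcx); rewrite Hc.
have HUP : UPset G [set x] X = [set x].
  apply/setP => z; apply/idP/idP; first by move=> /inUP[].
  rewrite inE => /eqP Hz; subst z; apply/inUP; split; first by rewrite inE.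
  move=> [c [Hc _ Hcx]]; apply: Hno; by exists c.
rewrite HUP; case: n {Hall} => [//|n] [Hsub [[_ HbX']|[Hns'' _]]].
  have Hargs : args (restrict G [set x]) = [set x] by [].
  have Hns2 : ~~ attacks (restrict G [set x]) x x by rewrite restrict_att (negbTE Hns).
  have HX := Hb _ _ _ Hargs Hns2 HbX'.
  have HxX : x \in X.
    have : x \in X :&: [set x] by rewrite HX set11.
    by rewrite inE => /andP[].
  split => // _ y Hy; apply/negP => HyX; apply: Hno; by exists y.
exfalso; by apply: Hns''; apply: (@single_one _ x).
Qed.

End Sem.

Section Exist.
Variable T : finType.
Implicit Types (G H : AF T) (S X Y A B P W : {set T}) (a b c x y z : T).

Definition anc G a := [set z in args G | reachb G z a && ~~ reachb G a z].

Lemma anc_mr G a b : mr G a b -> anc G a = anc G b.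
Proof.
have K : forall u v, mr G u v -> anc G u \subset anc G v.
  move=> u v /andP[Huv Hvu]; apply/subsetP => z; rewrite !inE => /andP[Hz /andP[Hzu Huz]].
  rewrite Hz (reach_trans Hzu Huv) /=; apply: contra Huz => Hvz; exact: reach_trans Huv Hvz.
move=> H; apply/eqP; rewrite eqEsubset K //; apply: K; by rewrite /mr andbC.
Qed.

Lemma anc_out G S s y : is_scc G S -> s \in S -> y \in out_attackers G S -> attacks G y s ->
  #|anc G y| < #|anc G s|.
Proof.
move=> HS Hs /inOut[Hy HyS _] Hys.
have Hsa : s \in args G by case: HS => _ Hsub _ _; apply: (subsetP Hsub).
have Hys' : reachb G y s by apply: reach_step (reach_refl Hy) Hys Hy Hsa.
have Hsy : ~~ reachb G s y.
  apply/negP => Hsy; move: HyS; rewrite (scc_eq HS Hs) inE Hy /mr Hsy Hys'; by [].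
apply: proper_card; rewrite properE; apply/andP; split.
  apply/subsetP => z; rewrite !inE => /andP[Hz /andP[Hzy Hyz]].
  rewrite Hz (reach_trans Hzy Hys') /=; apply: contra Hsy => Hsz; exact: reach_trans Hsz Hzy.
apply/subsetP => /(_ y); rewrite !inE Hy Hys' Hsy reach_refl //=; by move=> /(_ isT).
Qed.

Lemma scc_mr G S a b : is_scc G S -> a \in S -> b \in S -> mr G a b.
Proof.
move=> HS Ha Hb; move: Hb; rewrite (scc_eq HS Ha) inE => /andP[_ ->] //.
Qed.

Lemma scc_proper G S : is_scc G S -> ~ single_scc G -> #|S| < #|args G|.
Proof.
move=> HS Hns; have Hsub : S \subset args G by case: HS.
rewrite ltn_neqAle subset_leq_card // andbT; apply/negP => /eqP Hc.
have HSe : S = args G by apply/eqP; rewrite eqEcard Hsub Hc leqnn.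
apply: Hns; exists S; split => // S' HS'; have [a Ha] := scc_mem HS'.
have Ha' : a \in S by rewrite HSe; case: HS' => _ Hs' _ _; apply: (subsetP Hs').
by rewrite (scc_eq HS' Ha) (scc_eq HS Ha').
Qed.

Lemma UP_sub G S E : UPset G S E \subset S.
Proof. by apply/subsetP => z /inUP[]. Qed.

Theorem scc_rec_exists base : base_ok base -> forall G, exists E, scc_rec base #|args G|.+1 G E.
Proof.
move=> [Hb1 Hb2].
suff K : forall n G, #|args G| < n -> exists E, scc_rec base #|args G|.+1 G E.
  by move=> G; apply: (K #|args G|.+1).
elim=> [//|n IHn] G Hn.
case: (classic (single_scc G)) => Hs.
  have [X [HX HbX]] := Hb2 G; exists X; split => //; by left.
pose rk a := #|anc G a|.
suff Kk : forall k, exists Ek : {set T}, [/\ Ek \subset args G, (forall a, a \in Ek -> rk a < k) &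
   forall S, is_scc G S -> (forall s, s \in S -> rk s < k) ->
     scc_rec base #|args G| (restrict G (UPset G S Ek)) (Ek :&: S)].
  have [E [H1 H2 H3]] := Kk #|T|.+1; exists E; split => //; right; split => // S HS.
  by apply: H3 => // s _; rewrite ltnS /rk max_card.
elim=> [|k [Ek [Hk1 Hk2 Hk3]]].
  exists set0; split; [exact: sub0set|by move=> a; rewrite inE|].
  by move=> S HS Hlt; have [a Ha] := scc_mem HS; move: (Hlt a Ha).
pose C S := is_scc G S /\ forall s, s \in S -> rk s = k.
have HX : forall S, exists X, C S -> X \subset S /\
    scc_rec base #|args G| (restrict G (UPset G S Ek)) X.
  move=> S; case: (classic (C S)) => [[HS _]|HnC]; last by exists set0.
  have Hlt := scc_proper HS Hs.
  have HUPc : #|UPset G S Ek| < #|args G| by apply: leq_ltn_trans (subset_leq_card (UP_sub _ _ _)) Hlt.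
  have [X HX] := IHn (restrict G (UPset G S Ek)) (leq_trans HUPc (ltnSE Hn)).
  exists X => _; split.
    case: HX => HXs _; apply: subset_trans HXs (UP_sub _ _ _).
  by apply: scc_rec_mono HX.
pose Xf S := proj1_sig (constructive_indefinite_description _ (HX S)).
have HXf : forall S, C S -> Xf S \subset S /\
    scc_rec base #|args G| (restrict G (UPset G S Ek)) (Xf S).
  by move=> S HCS; exact: (proj2_sig (constructive_indefinite_description _ (HX S)) HCS).
pose Nk := [set a in args G | (rk a == k) && (a \in Xf (scc_of G a))].
exists (Ek :|: Nk); split.
- by rewrite subUset Hk1; apply/subsetP => a; rewrite inE => /andP[].
- move=> a; rewrite inE => /orP[/Hk2 H|]; first by apply: ltnW.
  by rewrite inE => /andP[_ /andP[/eqP -> _]].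
move=> S HS Hlt.
have HUP : UPset G S (Ek :|: Nk) = UPset G S Ek.
  apply/setP => z; apply/idP/idP => /inUP[Hz Hnn]; apply/inUP; split => // [[c [Hc Hco Hcz]]]; apply: Hnn.
    by exists c; split => //; rewrite inE Hc.
  exists c; split => //; move: Hc; rewrite inE => /orP[//|].
  rewrite inE => /andP[_ /andP[/eqP Hck _]].
  have [_ _ [b Hb Hcb]] := (inOut G S c).1 Hco.
  have := anc_out HS Hb Hco Hcb; rewrite -/(rk c) -/(rk b) Hck => Hkb.
  by move: (Hlt b Hb); rewrite ltnS leqNgt Hkb.
rewrite HUP.
case: (classic (forall s, s \in S -> rk s < k)) => Hall.
  have -> : (Ek :|: Nk) :&: S = Ek :&: S.
    apply/setP => z; rewrite !inE; case Hz: (z \in S); rewrite ?andbF ?andbT //.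
    case: (z \in Ek) => //=; apply/negP => /andP[_ /andP[/eqP Hzk _]].
    by move: (Hall z Hz); rewrite Hzk ltnn.
  by apply: Hk3.
have [s Hs1 Hs2] : exists2 s, s \in S & rk s = k.
  apply: NNPP => Hno; apply: Hall => s Hs1; have := Hlt s Hs1; rewrite ltnS leq_eqVlt => /orP[/eqP Hsk|//].
  by exfalso; apply: Hno; exists s.
have HCS : C S.
  split => // z Hz; by rewrite -Hs2 /rk (anc_mr (scc_mr HS Hz Hs1)).
have [HXs HXr] := HXf S HCS.
have -> : (Ek :|: Nk) :&: S = Xf S.
  apply/setP => z; rewrite !inE; case Hz: (z \in S); rewrite ?andbF ?andbT /=; last first.
    by apply/esym/negP => /(subsetP HXs); rewrite Hz.
  have HzEk : z \in Ek = false.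
    by apply/negP => /Hk2; rewrite (proj2 HCS z Hz) ltnn.
  have Hza : z \in args G by case: HS => _ Hsub _ _; apply: (subsetP Hsub).
  by rewrite HzEk Hza (proj2 HCS z Hz) eqxx -(scc_eq HS Hz).
exact: HXr.
Qed.

End Exist.

Lemma naive_ok (T : finType) : base_ok (@naive T).
Proof.
split; last first.
  move=> H; have [P [[HPs HPc] HPm]] := naive_exists H; exists P; split => //; by split.
move=> H x X Ha Hns [[HXs HXc] HXm]; apply/esym; apply: HXm.
  split; first by rewrite Ha.
  by move=> u v; rewrite !inE => /eqP -> /eqP ->.
by rewrite -Ha.
Qed.

Lemma stage_ok (T : finType) : base_ok (@stage T).
Proof.
split; last first.
  move=> H; have [P [[HPs HPc] HPm]] := stage_exists H; exists P; split => //; by split.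
move=> H x X Ha Hns [[HXs HXc] HXm].
have Hx1 : conflict_free H [set x].
  split; first by rewrite Ha.
  by move=> u v; rewrite !inE => /eqP -> /eqP ->.
case HxX: (x \in X).
  by apply/eqP; rewrite eqEsubset sub1set HxX andbT -Ha.
have HX0 : X = set0.
  apply/setP => z; rewrite in_set0; apply/negP => Hz; move: (subsetP HXs z Hz).
  by rewrite Ha inE => /eqP Hzx; subst z; rewrite Hz in HxX.
exfalso; apply: HXm; exists [set x]; split => //.
rewrite HX0 properE; apply/andP; split.
  apply/subsetP => z; rewrite /range /splus !inE /= => /existsP[a]; by rewrite inE.
apply/negP => /subsetP /(_ x); rewrite /range /splus !inE eqxx /= => /(_ isT) /existsP[a].
by rewrite inE.
Qed.

Lemma restrict_all (T : finType) (G : AF T) : wf_AF G -> restrict G (args G) = G.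
Proof.
case: G => ar att Hwf; rewrite /restrict /=; congr mkAF; apply/setP => p; rewrite inE.
case Hp: (p \in att) => //=; move: (subsetP Hwf p Hp); case: p Hp => u v Hp; by rewrite in_setX.
Qed.

Section Main.
Variable T : finType.
Variables F F' : AF T.
Hypothesis wfF : wf_AF F.
Hypothesis wfF' : wf_AF F'.
Hypothesis Hrm : rm_exp F F'.
Implicit Types (G H : AF T) (S X Y A B P W E C : {set T}) (a b c x y z : T).

Let AR := args F.
Let AR' := args F'.
Definition Nw := args F' :\: args F.
Definition Uw := [set x in args F' | [exists b in Nw, reachb F' x b]].
Definition rkw x := #|[set z | [exists y, reachb F' z y && attacks F' y x]]|.

Lemma sub_args : args F \subset args F'.
Proof. by case: Hrm => [[]]. Qed.
Lemma sub_atts a b : attacks F a b -> attacks F' a b.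
Proof. by case: Hrm => [[_ [H _]]] _ _; apply: (subsetP H). Qed.
Lemma attF_args a b : attacks F a b -> a \in args F /\ b \in args F.
Proof. by move=> /(subsetP wfF); rewrite in_setX => /andP. Qed.
Lemma attF'_args a b : attacks F' a b -> a \in args F' /\ b \in args F'.
Proof. by move=> /(subsetP wfF'); rewrite in_setX => /andP. Qed.
Lemma att_old a b : a \in args F -> b \in args F -> attacks F' a b = attacks F a b.
Proof.
move=> Ha Hb; apply/idP/idP; last by apply: sub_atts.
move=> H; apply: NNPP => /negP Hn; case: Hrm => [[_ [_ Hnew]]] _ _.
by apply: (Hnew a b H Hn).
Qed.
Lemma inN b : b \in Nw = (b \in args F') && (b \notin args F).
Proof. by rewrite /Nw in_setD andbC. Qed.
Lemma arg_old a : a \in args F -> a \in args F'.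
Proof. by apply: (subsetP sub_args). Qed.

Lemma new_nocyc b : b \in Nw -> ~ in_some_cycle F' b.
Proof.
rewrite inN => /andP[_ Hb] [s [Hs Hbs]]; case: Hrm => _ Hsc _.
have := (Hsc s).2 Hs; case: s Hs Hbs => [//|u r] _ Hbs [_ _ _ _ /allP Hall].
by move: (Hall b Hbs); rewrite (negbTE Hb).
Qed.

Lemma U_nocyc x : x \in Uw -> ~ in_some_cycle F' x.
Proof.
rewrite inE => /andP[Hx /existsP[b /andP[Hb Hxb]]].
case Hxo: (x \in args F); last first.
  by apply: new_nocyc; rewrite inN Hx Hxo.
case: Hrm => _ _ H3; apply: (H3 x b Hxo) => //; by apply/reachP.
Qed.

Lemma regU : regW F' Uw rkw.
Proof.
split; first by apply/subsetP => x; rewrite inE => /andP[].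
move=> x y Hx Hyx; have [Hy Hx'] := attF'_args Hyx.
have HyU : y \in Uw.
  move: Hx; rewrite !inE Hy => /andP[_ /existsP[b /andP[Hb Hxb]]].
  apply/existsP; exists b; rewrite Hb /=; apply: reach_trans Hxb.
  by apply: reach_step (reach_refl Hy) Hyx Hy Hx'.
split => //; apply: proper_card; rewrite properE; apply/andP; split.
  apply/subsetP => z; rewrite !inE => /existsP[w /andP[Hzw Hwy]].
  apply/existsP; exists y; rewrite Hyx andbT.
  by apply: reach_step Hzw Hwy (proj1 (attF'_args Hwy)) Hy.
apply/negP => /subsetP /(_ y); rewrite !inE.
have -> : [exists y0, reachb F' y y0 && attacks F' y0 x] by apply/existsP; exists y; rewrite reach_refl.
move=> /(_ isT) /existsP[w /andP[Hyw Hwy]].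
by apply: (U_nocyc HyU); apply: cyc1 Hyw Hwy.
Qed.

Lemma regUF : regW F (Uw :&: args F) rkw.
Proof.
split; first by apply: subsetIr.
move=> x y; rewrite inE => /andP[Hx Hxo] Hyx.
have [HyU Hlt] := (proj2 regU) x y Hx (sub_atts Hyx).
by rewrite inE HyU (proj1 (attF_args Hyx)).
Qed.

Lemma N_U b : b \in Nw -> b \in Uw.
Proof.
move=> Hb; move: (Hb); rewrite inN => /andP[Hb' _].
by rewrite inE Hb' /=; apply/existsP; exists b; rewrite Hb reach_refl.
Qed.

Definition good A := A \subset args F /\ forall b, b \in Nw -> exists2 c, c \in A & attacks F' c b.

Lemma cf_tr A : A \subset args F -> conflict_free F A <-> conflict_free F' A.
Proof.
move=> HA; split => [[Hs Hc]|[Hs Hc]]; split => //.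
- by apply: subset_trans HA sub_args.
- by move=> u v Hu Hv; rewrite att_old ?(subsetP HA) //; apply: Hc.
- by move=> u v Hu Hv; rewrite -att_old ?(subsetP HA) //; apply: Hc.
Qed.

Lemma acc_tr A a : good A -> a \in args F -> acceptable F a A <-> acceptable F' a A.
Proof.
move=> [HA Hcov] Ha; split => H u Hu.
  case Huo: (u \in args F).
    rewrite att_old // in Hu; have [c Hc Hcu] := H u Hu; exists c => //.
    by rewrite att_old // (subsetP HA).
  by apply: Hcov; rewrite inN Huo (proj1 (attF'_args Hu)).
have [Huo _] := attF_args Hu.
have [c Hc Hcu] := H u (sub_atts Hu); exists c => //.
by rewrite -att_old // (subsetP HA).
Qed.

Lemma adm_tr A : good A -> admissible F A <-> admissible F' A.
Proof.
move=> Hg; have [HA _] := Hg; split => [[Hcf Hacc]|[Hcf Hacc]]; split.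
- by apply/cf_tr.
- by move=> a Ha; apply/acc_tr => //; [apply: (subsetP HA)|apply: Hacc].
- by apply/cf_tr.
- by move=> a Ha; apply/acc_tr => //; [apply: (subsetP HA)|apply: Hacc].
Qed.

Lemma comp_tr A : good A -> complete F A <-> complete F' A.
Proof.
move=> Hg; have [HA Hcov] := Hg; split => [[Had Hc]|[Had Hc]]; split.
- by apply/adm_tr.
- move=> a Ha Hacc; case Hao: (a \in args F).
    by apply: Hc => //; apply/acc_tr.
  have [c Hc' Hca] := Hcov a (ltac:(by rewrite inN Ha Hao)).
  have [d Hd Hdc] := Hacc c Hca.
  have [[_ Hcf] _] := Had.
  by move: (Hcf d c Hd Hc'); rewrite -(att_old (subsetP HA d Hd) (subsetP HA c Hc')) Hdc.
- by apply/adm_tr.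
- by move=> a Ha Hacc; apply: Hc; [apply: arg_old|apply/acc_tr].
Qed.

Lemma rangeF_sub A : A \subset args F -> range F A \subset args F.
Proof.
move=> HA; apply/subsetP => x; rewrite /range /splus !inE => /orP[/(subsetP HA)//|/existsP[a /andP[_ H]]].
exact: (proj2 (attF_args H)).
Qed.

Lemma range_tr A x : good A -> (x \in range F' A) = (x \in range F A) || (x \in Nw).
Proof.
move=> [HA Hcov]; rewrite /range /splus inN !inE; apply/idP/idP.
  move=> /orP[->//|/existsP[a /andP[Ha Hax]]].
  case Hxo: (x \in args F); last by rewrite (proj2 (attF'_args Hax)) !orbT.
  rewrite andbF orbF; apply/orP; right; apply/existsP; exists a; by rewrite Ha -att_old // (subsetP HA).
move=> /orP[/orP[->//|/existsP[a /andP[Ha Hax]]]|Hx]; apply/orP; right; apply/existsP.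
  by exists a; rewrite Ha sub_atts.
by have [c Hc Hcx] := Hcov x (ltac:(by rewrite inN)); exists c; rewrite Hc.
Qed.

Lemma rangeF_N A x : A \subset args F -> x \in range F A -> x \notin Nw.
Proof. by move=> HA /(subsetP (rangeF_sub HA)) Hx; rewrite inN Hx andbF. Qed.



Lemma Lab_tr C : C \subset args F -> Lab F' Uw C -> Lab F (Uw :&: args F) C.
Proof.
move=> HC HL x; rewrite inE => /andP[HxU Hxo]; rewrite (HL x HxU); split => H y Hy.
  by apply: H; apply: sub_atts.
apply/negP => HyC; have Hyo := subsetP HC y HyC.
by move: (H y); rewrite -att_old // Hy HyC => /(_ isT).
Qed.

Lemma good_of_Lab E C : E \subset args F -> Lab F (Uw :&: args F) E ->
  Lab F (Uw :&: args F) C -> good C -> good E.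
Proof.
move=> HE HLE HLC [HC Hcov]; split => // b Hb; have [c Hc Hcb] := Hcov b Hb.
have Hco := subsetP HC c Hc.
have [HcU _] := (proj2 regU) b c (N_U Hb) Hcb.
have HcW : c \in Uw :&: args F by rewrite inE HcU.
by exists c => //; rewrite (Lab_uniq regUF HLE HLC HcW).
Qed.

Lemma compF'_agree C X : complete F' C -> complete F' X -> forall x, x \in Uw -> (x \in C) = (x \in X).
Proof. by move=> HC HX; apply: (Lab_uniq regU (complete_Lab regU HC) (complete_Lab regU HX)). Qed.

Section CaseB.
Variable C0 : {set T}.
Hypothesis HC0 : complete F' C0.
Hypothesis HB : C0 \subset args F.

Lemma B1 X : complete F' X -> good X.
Proof.
move=> HX; have HLX := complete_Lab regU HX.
have HXN : forall b, b \in Nw -> b \notin X.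
  move=> b Hb; rewrite -(compF'_agree HC0 HX (N_U Hb)); apply/negP => /(subsetP HB).
  by move: Hb; rewrite inN => /andP[_ /negbTE ->].
split.
  apply/subsetP => x Hx; have Hx' : x \in args F' by case: HX => [[[Hs _] _] _]; apply: (subsetP Hs).
  apply: NNPP => /negP Hxo; have Hb : x \in Nw by rewrite inN Hx' Hxo.
  by move: (HXN x Hb); rewrite Hx.
move=> b Hb; apply: NNPP => Hno; have := HXN b Hb; move/negP; apply.
apply/(HLX b (N_U Hb)) => y Hy; apply/negP => HyX; apply: Hno; by exists y.
Qed.

Lemma C0good : good C0.
Proof. exact: B1 HC0. Qed.

Lemma B2 E : complete F E -> good E.
Proof.
move=> HE; apply: (good_of_Lab (C := C0)).
- by case: HE => [[[Hs _] _] _].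
- exact: complete_Lab regUF HE.
- apply: Lab_tr => //; exact: complete_Lab regU HC0.
- exact: C0good.
Qed.

Lemma B3 X : complete F X <-> complete F' X.
Proof.
split => H; [apply/comp_tr => //; exact: B2|apply/comp_tr => //; exact: B1].
Qed.

Definition A0 := C0 :&: Uw.

Lemma A0_adm : admissible F A0.
Proof.
have [HCadm _] := (proj2 (B3 C0)) HC0.
have [[Hs Hc] Hacc] := HCadm.
split; first by apply: cf_sub (conj Hs Hc) (subsetIl _ _).
move=> x; rewrite inE => /andP[HxC HxU] y Hyx.
have [z Hz Hzy] := Hacc x HxC y Hyx.
have HxW : x \in Uw :&: args F by rewrite inE HxU (subsetP HB).
have [HyW _] := (proj2 regUF) x y HxW Hyx.
have [HzW _] := (proj2 regUF) y z HyW Hzy.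
exists z => //; rewrite inE Hz; by move: HzW; rewrite inE => /andP[].
Qed.

Lemma A0_sub E : complete F E -> A0 \subset E.
Proof.
move=> HE; apply/subsetP => x; rewrite inE => /andP[HxC HxU].
have HxW : x \in Uw :&: args F by rewrite inE HxU (subsetP HB).
rewrite -(Lab_uniq regUF (Lab_tr HB (complete_Lab regU HC0)) (complete_Lab regUF HE) HxW).
exact: HxC.
Qed.

Lemma A0_good E : E \subset args F -> A0 \subset E -> good E.
Proof.
move=> HE HA; split => // b Hb; have [c Hc Hcb] := (proj2 C0good) b Hb.
have [HcU _] := (proj2 regU) b c (N_U Hb) Hcb.
by exists c => //; apply: (subsetP HA); rewrite inE Hc.
Qed.

Lemma pref_of_max G S' : admissible G S' -> exists2 P, preferred G P & S' \subset P.
Proof.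
move=> HS'; have [P [HP HsP Hm]] := @max_gen T (admissible G) id S' HS'.
by exists P => //; split => // S'' H1 H2; apply: Hm.
Qed.

Lemma prefFF' P : preferred F P -> preferred F' P.
Proof.
move=> HP; have HPc := pref_complete HP.
split; first by case: ((proj1 (B3 P)) HPc).
move=> S' HS' Hsub.
have [P' HP' HsP'] := pref_of_max HS'.
have HP'c : complete F P' by apply/B3; apply: pref_complete.
have HPP' : P' = P by apply: (proj2 HP) => //; [case: HP'c|apply: subset_trans Hsub HsP'].
by apply/eqP; rewrite eqEsubset Hsub andbT -HPP'.
Qed.

Lemma prefF'F P : preferred F' P -> preferred F P.
Proof.
move=> HP; have HPc' := pref_complete HP; have HPc := (proj2 (B3 P)) HPc'.
split; first by case: HPc.
move=> S HS Hsub; have [HPs HPcov] := B1 HPc'.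
have HSg : good S.
  split; first by case: HS => [[]].
  by move=> b Hb; have [c Hc Hcb] := HPcov b Hb; exists c => //; apply: (subsetP Hsub).
by apply: (proj2 HP) => //; apply/adm_tr.
Qed.

Lemma range_mono_tr X Y : good X -> good Y -> range F' X \subset range F' Y -> range F X \subset range F Y.
Proof.
move=> HX HY Hs; apply/subsetP => x Hx.
have : x \in range F' Y by apply: (subsetP Hs); rewrite range_tr // Hx.
rewrite range_tr // => /orP[//|HxN]; by move: (rangeF_N (proj1 HX) Hx); rewrite HxN.
Qed.

Lemma range_eq_tr X Y : good X -> good Y -> range F X = range F Y -> range F' X = range F' Y.
Proof. by move=> HX HY He; apply/setP => x; rewrite !range_tr // He. Qed.

Lemma ssFF' P : semi_stable F P -> semi_stable F' P.
Proof.
move=> [HPc Hm]; have HPg := B2 HPc; split; first by apply/B3.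
move=> S' HS' Hs; have HS'c : complete F S' by apply/B3.
have HS'g := B2 HS'c.
apply: range_eq_tr => //; apply: Hm => //; exact: range_mono_tr.
Qed.

Lemma ssF'F P : semi_stable F' P -> semi_stable F P.
Proof.
move=> [HPc Hm]; have HPg := B1 HPc; split; first by apply/B3.
move=> S HS Hs; have HSc' : complete F' S by apply/B3.
have HSg := B1 HSc'.
have He : range F' S = range F' P by apply: Hm => //; apply/subsetP => x; rewrite !range_tr // => /orP[Hx|->]; [rewrite (subsetP Hs)|rewrite orbT].
apply/setP => x; apply/idP/idP => Hx.
  have : x \in range F' P by rewrite -He range_tr // Hx.
  rewrite range_tr // => /orP[//|HxN]; by move: (rangeF_N (proj1 HSg) Hx); rewrite HxN.
by apply: (subsetP Hs).
Qed.

Lemma groundFF' E : grounded F E -> grounded F' E.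
Proof.
move=> [HEc Hm]; split; first by apply/B3.
by move=> S' HS' Hs; apply: Hm => //; apply/B3.
Qed.

Lemma idealB (Q Q' : {set T} -> Prop) E : (forall P, Q' P -> Q P) -> (forall P, Q P -> Q' P) ->
  (exists P, Q' P) -> (forall P, Q' P -> complete F' P) -> (exists P, Q P) ->
  (forall P, Q P -> complete F P) -> idealQ F Q E -> idealQ F' Q' E.
Proof.
move=> HQ'Q HQQ' [P0 HP0] HQ'c HexQ HQc HE.
have HEs : E \subset args F by case: HE => [[[]]].
have HA0 : A0 \subset E.
  apply: (idealQ_contains HexQ _ A0_adm _ HE).
    by move=> P HP; case: (HQc P HP).
  by move=> P HP; apply: A0_sub; apply: HQc.
have HEg := A0_good HEs HA0.
case: HE => HEadm HEsub HEmax; split.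
- by apply/adm_tr.
- by move=> P HP; apply: HEsub; apply: HQ'Q.
move=> S' HS' HS'sub HES'.
have HS'g : good S'.
  split; first by apply: subset_trans (HS'sub _ HP0) (proj1 (B1 (HQ'c _ HP0))).
  by move=> b Hb; have [c Hc Hcb] := (proj2 HEg) b Hb; exists c => //; apply: (subsetP HES').
apply: HEmax => //; first by apply/adm_tr.
by move=> P HP; apply: HS'sub; apply: HQQ'.
Qed.

End CaseB.


Lemma in_range G X x : (x \in range G X) = (x \in X) || [exists a in X, attacks G a x].
Proof. by rewrite /range /splus in_setU inE. Qed.

Lemma rangeFF' X : range F X \subset range F' X.
Proof.
apply/subsetP => x; rewrite !in_range => /orP[->//|/existsP[a /andP[Ha Hax]]].
by apply/orP; right; apply/existsP; exists a; rewrite Ha sub_atts.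
Qed.

Lemma rangeF'F X x : X \subset args F -> x \in range F' X -> x \in args F -> x \in range F X.
Proof.
move=> HX; rewrite !in_range => /orP[->//|/existsP[a /andP[Ha Hax]]] Hx.
by apply/orP; right; apply/existsP; exists a; rewrite Ha -att_old // (subsetP HX).
Qed.

Lemma stage_main E : stage F E -> exists E', stage F' E' /\ (~~ (E' \subset args F) \/ E' = E).
Proof.
move=> [HEcf HEmax]; have HEs : E \subset args F by case: HEcf.
have HEcf' : conflict_free F' E by apply/cf_tr.
case: (classic (stage F' E)) => HsE; first by exists E; split => //; right.
have [T0 [HT0 HpT0]] : exists T0, conflict_free F' T0 /\ range F' E \proper range F' T0.
  by apply: NNPP => Hno; apply: HsE; split.
have [S [HS HTS Hm]] := @max_gen T (conflict_free F') (range F') T0 HT0.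
have HSst : stage F' S.
  split => // [[S' [HS' Hp]]]; move: (Hp); rewrite properE => /andP[Hsub Hn].
  by move: Hn; rewrite (Hm S' HS' Hsub) subxx.
case: (classic (S \subset args F)) => HSs; last first.
  by exists S; split => //; left; apply/negP.
exfalso.
have HScf : conflict_free F S by apply/cf_tr.
have HES' : range F' E \subset range F' S.
  by apply: subset_trans HTS; move: HpT0; rewrite properE => /andP[].
have H1 : range F E \subset range F S.
  apply/subsetP => x Hx; apply: rangeF'F => //; last by apply: (subsetP (rangeF_sub HEs)).
  by apply: (subsetP HES'); apply: (subsetP (rangeFF' E)).
have H2 : range F S \subset range F E.
  apply: NNPP => Hn; apply: HEmax; exists S; split => //.
  by rewrite properE H1 /=; apply/negP.
have Hag := cf_agree regUF HScf HEcf
  (fun x _ HxS HxE => ltac:(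
     have := subsetP H2 x (ltac:(by rewrite in_range HxS));
     rewrite in_range (negbTE HxE) /= => /existsP[a /andP[Ha Hax]]; by exists a))
  (fun x _ HxE HxS => ltac:(
     have := subsetP H1 x (ltac:(by rewrite in_range HxE));
     rewrite in_range (negbTE HxS) /= => /existsP[a /andP[Ha Hax]]; by exists a)).
have H3 : range F' S \subset range F' E.
  apply/subsetP => x; rewrite in_range => /orP[HxS|/existsP[s /andP[Hs Hsx]]].
    by apply: (subsetP (rangeFF' E)); apply: (subsetP H2); rewrite in_range HxS.
  have Hso := subsetP HSs s Hs.
  case Hxo: (x \in args F).
    apply: (subsetP (rangeFF' E)); apply: (subsetP H2).
    by rewrite in_range; apply/orP; right; apply/existsP; exists s; rewrite Hs -att_old.
  have HxN : x \in Nw by rewrite inN Hxo (proj2 (attF'_args Hsx)).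
  have [HsU _] := (proj2 regU) x s (N_U HxN) Hsx.
  have HsW : s \in Uw :&: args F by rewrite inE HsU.
  rewrite in_range; apply/orP; right; apply/existsP; exists s; by rewrite -(Hag s HsW) Hs.
move: HpT0; rewrite properE => /andP[_ /negP]; apply.
exact: subset_trans HTS H3.
Qed.

Lemma reachFF' a z : reachb F a z -> reachb F' a z.
Proof.
move=> /andP[Ha Haz]; rewrite /reachb arg_old //=.
apply: (connect_sub _ Haz) => u v /andP[/andP[Huv Hu] Hv]; apply: connect1.
by rewrite /edge sub_atts // !arg_old.
Qed.

Lemma path_old p a : a \in args F -> all (fun x => x \in args F) p -> path (edge F') a p -> path (edge F) a p.
Proof.
elim: p a => //= y p IH a Ha /andP[Hy Hp] /andP[/andP[/andP[Hay _] _] Hpp].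
by rewrite /edge -att_old // Hay Ha Hy /=; apply: IH.
Qed.

Lemma reach_back a z : a \in args F -> in_some_cycle F' a -> reachb F' a z -> reachb F a z.
Proof.
move=> Ha Hcyc Haz; move: (Haz) => /andP[Ha' /connectP[p Hp Hz]].
have Hold : forall w, reachb F' a w -> w \in args F.
  move=> w Hw; apply: NNPP => /negP Hwo; case: Hrm => _ _ H3.
  apply: (H3 a w Ha) => //; last by apply/reachP.
  by rewrite in_setD Hwo (reach_args Hw).
rewrite /reachb Ha /=; apply/connectP; exists p => //; apply: path_old => //.
apply/allP => w Hw; apply: Hold; rewrite /reachb Ha' /=.
by apply: (path_connect Hp); rewrite inE Hw orbT.
Qed.

Lemma scc_old a : a \in args F -> scc_of F' a = scc_of F a.
Proof.
move=> Ha; apply/setP => z; rewrite !inE; apply/idP/idP; last first.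
  move=> /andP[Hz /andP[H1 H2]]; by rewrite arg_old // /mr !reachFF'.
move=> /andP[Hz /andP[Haz Hza]].
case: (eqVneq a z) => [<-|Hne]; first by rewrite Ha /mr !reach_refl.
have Hca := cyc2 Haz Hza Hne.
have Hcz := cyc2 Hza Haz (ltac:(by rewrite eq_sym)).
have Hzo : z \in args F.
  apply: NNPP => /negP Hzo; apply: (new_nocyc (b := z)) => //; by rewrite inN Hz Hzo.
by rewrite Hzo /mr !reach_back.
Qed.

Lemma scc_new b : b \in Nw -> scc_of F' b = [set b].
Proof.
move=> Hb; have Hb' : b \in args F' by move: Hb; rewrite inN => /andP[].
apply/setP => z; rewrite !inE; apply/idP/idP; last by move=> /eqP ->; rewrite Hb' /mr reach_refl.
move=> /andP[Hz /andP[Hbz Hzb]]; apply: NNPP => /negP Hne.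
by apply: (new_nocyc Hb); apply: cyc2 Hbz Hzb (ltac:(by rewrite eq_sym)).
Qed.

Lemma restrict_tr X : X \subset args F -> restrict F' X = restrict F X.
Proof.
move=> HX; rewrite /restrict; congr mkAF; apply/setP => -[u v]; rewrite !inE /=.
case Hu: (u \in X); case Hv: (v \in X); rewrite ?andbF //= !andbT.
by rewrite -[(u, v) \in atts F']/(attacks F' u v) att_old ?(subsetP HX).
Qed.

Lemma UP_tr S E : S \subset args F -> E \subset args F -> UPset F' S E = UPset F S E.
Proof.
move=> HS HE; apply/setP => z; apply/idP/idP => /inUP[Hz Hn]; apply/inUP; split => // [[c [Hc Hco Hcz]]];
  apply: Hn; exists c; have Hco' := subsetP HE c Hc; have Hzo := subsetP HS z Hz.
- split => //; last by rewrite att_old.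
  move: Hco => /inOut[_ H2 [b Hb Hcb]]; apply/inOut; split => //; first exact: arg_old.
  by exists b => //; rewrite att_old // (subsetP HS).
- split => //; last by rewrite -att_old.
  move: Hco => /inOut[_ H2 [b Hb Hcb]]; apply/inOut; split => //.
  by exists b => //; rewrite -att_old // (subsetP HS).
Qed.

Lemma cf2_tr base E : good E -> Nw != set0 ->
  scc_rec base #|args F|.+1 F E -> scc_rec base #|args F'|.+1 F' E.
Proof.
move=> [HEs Hcov] /set0Pn[b0 Hb0] [_ HE].
have HcardF : #|args F| < #|args F'|.
  apply: proper_card; rewrite properE sub_args /=; apply/negP => /subsetP /(_ b0).
  by move: Hb0; rewrite inN => /andP[-> /negbTE ->] /(_ isT).
split; first by apply: subset_trans HEs sub_args.
right; split.
  move=> [S0 [HS0 Hu]]; have [c Hc Hcb] := Hcov b0 Hb0.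
  have Hb0' : b0 \in args F' by move: Hb0; rewrite inN => /andP[].
  have Hco := subsetP HEs c Hc.
  have E1 := Hu _ (is_scc_of Hb0'); have E2 := Hu _ (is_scc_of (arg_old Hco)).
  have : c \in scc_of F' c by rewrite inE arg_old // /mr reach_refl // arg_old.
  rewrite E2 -E1 scc_new // inE => /eqP Hcb0; subst c.
  by move: Hb0; rewrite inN Hco andbF.
move=> S HS; have [a Ha] := scc_mem HS; rewrite (scc_eq HS Ha).
have Ha' : a \in args F' by case: HS => _ Hs _ _; apply: (subsetP Hs).
case Hao: (a \in args F); last first.
  have HaN : a \in Nw by rewrite inN Ha' Hao.
  rewrite scc_new //.
  have -> : UPset F' [set a] E = set0.
    apply/setP => z; rewrite in_set0; apply/negP => /inUP[Hz Hn]; apply: Hn.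
    have [c Hc Hca] := Hcov a HaN; exists c; split => //; last by move: Hz; rewrite inE => /eqP ->.
    apply/inOut; split; [exact: arg_old (subsetP HEs c Hc)| |by exists a; rewrite ?inE].
    rewrite inE; apply/negP => /eqP Hca'; subst c; by rewrite (subsetP HEs a Hc) in Hao.
  have -> : E :&: [set a] = set0.
    apply/setP => z; rewrite !inE; apply/negP => /andP[HzE /eqP Hza]; subst z.
    by rewrite (subsetP HEs a HzE) in Hao.
  have : 0 < #|args F'| by apply/card_gt0P; exists a.
  case: #|args F'| => [//|m] _; exact: scc_rec_empty.
rewrite scc_old //; have HSF := is_scc_of Hao.
have HSs : scc_of F a \subset args F by case: HSF.
rewrite UP_tr // restrict_tr; last by apply: subset_trans (UP_sub _ _ _) HSs.
case: HE => [[[S0 [HS0 Hu]] HbE]|[Hns Hall]].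
  have HSe : scc_of F a = args F.
    apply/eqP; rewrite eqEsubset HSs /=; apply/subsetP => z Hz.
    rewrite (Hu _ (is_scc_of Hao)) -(Hu _ (is_scc_of Hz)) inE Hz /mr reach_refl //.
  rewrite HSe.
  have -> : UPset F (args F) E = args F.
    apply/setP => z; apply/idP/idP => [/inUP[]//|Hz]; apply/inUP; split => // [[c [_ /inOut[Hc Hc' _] _]]].
    by rewrite Hc in Hc'.
  rewrite restrict_all // (setIidPl HEs).
  apply: (scc_rec_mono HcardF); split => //; by left; split => //; exists S0.
apply: scc_rec_mono (Hall _ HSF); exact: ltnW.
Qed.

Lemma A0'_adm C : complete F' C -> admissible F' (C :&: Uw).
Proof.
move=> [[[Hs Hc] Hacc] _].
split; first by apply: cf_sub (conj Hs Hc) (subsetIl _ _).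
move=> x; rewrite inE => /andP[HxC HxU] y Hyx.
have [z Hz Hzy] := Hacc x HxC y Hyx.
have [HyU _] := (proj2 regU) x y HxU Hyx.
have [HzU _] := (proj2 regU) y z HyU Hzy.
by exists z => //; rewrite inE Hz.
Qed.

Lemma AF_eq G H : args G = args H -> atts G = atts H -> G = H.
Proof. by case: G => ? ?; case: H => ? ? /= -> ->. Qed.

Lemma N0_eq : Nw = set0 -> F' = F.
Proof.
move=> HN.
have Ha : args F' = args F.
  apply/eqP; rewrite eqEsubset sub_args andbT; apply/subsetP => z Hz.
  apply: NNPP => /negP Hzo; have : z \in Nw by rewrite inN Hz Hzo.
  by rewrite HN inE.
apply: AF_eq => //; apply/setP => -[u v].
rewrite -[(u, v) \in atts F']/(attacks F' u v) -[(u, v) \in atts F]/(attacks F u v).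
apply/idP/idP => H; last by apply: sub_atts.
have [Hu Hv] := attF'_args H; rewrite Ha in Hu Hv; by rewrite -att_old.
Qed.

Lemma scc_rec_sub base n G E : scc_rec base n G E -> E \subset args G.
Proof. by case: n => [//|n] []. Qed.

Lemma main_sec (x : semantics) E : sigma x F E ->
  exists E' : {set T}, sigma x F' E' /\ (~~ (E' \subset args F) \/ E' = E).
Proof using wfF wfF' Hrm.
move=> HE.
case: (eqVneq Nw set0) => [HN|HN].
  by rewrite (N0_eq HN); exists E; split => //; right.
have [C0 HC0] := complete_exists F'.
case: (boolP (C0 \subset args F)) => HB.
  case: x HE => /= HE.
  - by exists E; split; [apply/(B3 HC0 HB)|right].
  - by exists E; split; [apply: (prefFF' HC0 HB)|right].
  - by exists E; split; [apply: (ssFF' HC0 HB)|right].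
  - exact: stage_main.
  - exists E; split; last by right.
    apply: cf2_tr => //.
    apply: (good_of_Lab (C := C0)).
    + exact: scc_rec_sub HE.
    + exact: scc_rec_Lab (@stage_ok T) regUF HE.
    + apply: Lab_tr => //; exact: complete_Lab regU HC0.
    + exact: C0good.
  - exists E; split; last by right.
    apply: cf2_tr => //.
    apply: (good_of_Lab (C := C0)).
    + exact: scc_rec_sub HE.
    + exact: scc_rec_Lab (@naive_ok T) regUF HE.
    + apply: Lab_tr => //; exact: complete_Lab regU HC0.
    + exact: C0good.
  - by exists E; split; [apply: (groundFF' HC0 HB)|right].
  - exists E; split; last by right.
    apply: (idealB HC0 HB (Q := preferred F)) => //.
    + exact: prefF'F HC0 HB.
    + exact: prefFF' HC0 HB.
    + exact: pref_exists.
    + exact: pref_complete.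
    + exact: pref_exists.
    + exact: pref_complete.
  - exists E; split; last by right.
    apply: (idealB HC0 HB (Q := semi_stable F)) => //.
    + exact: ssF'F HC0 HB.
    + exact: ssFF' HC0 HB.
    + exact: ss_exists HC0.
    + by move=> P [].
    + by have [C1 HC1] := complete_exists F; exact: ss_exists HC1.
    + by move=> P [].
have [b HbC Hbo] := subsetPn HB.
have Hb' : b \in args F' by case: HC0 => [[[Hs _] _] _]; apply: (subsetP Hs).
have HbN : b \in Nw by rewrite inN Hb' Hbo.
have Hcont : forall X, complete F' X -> b \in X.
  by move=> X HX; rewrite -(compF'_agree HC0 HX (N_U HbN)).
have Hnot : forall X, b \in X -> ~~ (X \subset args F).
  by move=> X HbX; apply/negP => /subsetP /(_ b HbX); rewrite (negbTE Hbo).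
have HA0 : forall Q, (exists P, Q P) -> (forall P, Q P -> complete F' P) ->
    exists I, idealQ F' Q I /\ b \in I.
  move=> Q HexQ HQc; have [I HI] := idealQ_exists F' Q; exists I; split => //.
  have : C0 :&: Uw \subset I.
    apply: (idealQ_contains HexQ _ (A0'_adm HC0) _ HI).
      by move=> P HP; case: (HQc P HP).
    move=> P HP; apply/subsetP => z; rewrite inE => /andP[HzC HzU].
    by rewrite -(compF'_agree HC0 (HQc P HP) HzU).
  by move/subsetP; apply; rewrite inE HbC N_U.
case: x HE => /= HE.
- by exists C0; split => //; left; apply: Hnot.
- have [P HP] := pref_exists F'; exists P; split => //; left; apply: Hnot; apply: Hcont.
  exact: pref_complete.
- have [P HP] := ss_exists HC0; exists P; split => //; left; apply: Hnot; apply: Hcont.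
  by case: HP.
- exact: stage_main.
- have [X HX] := scc_rec_exists (@stage_ok T) F'; exists X; split => //; left; apply: Hnot.
  rewrite (Lab_uniq regU (scc_rec_Lab (@stage_ok T) regU HX) (complete_Lab regU HC0) (N_U HbN)).
  exact: HbC.
- have [X HX] := scc_rec_exists (@naive_ok T) F'; exists X; split => //; left; apply: Hnot.
  rewrite (Lab_uniq regU (scc_rec_Lab (@naive_ok T) regU HX) (complete_Lab regU HC0) (N_U HbN)).
  exact: HbC.
- have [P [HP _]] := grounded_exists HC0; exists P; split => //; left; apply: Hnot; apply: Hcont.
  by case: HP.
- have [I [HI HbI]] := HA0 (preferred F') (pref_exists F') (@pref_complete _ F').
  by exists I; split => //; left; apply: Hnot.
- have [I [HI HbI]] := HA0 (semi_stable F') (ss_exists HC0) (fun P HP => proj1 HP).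
  by exists I; split => //; left; apply: Hnot.
Qed.

End Main.

Theorem proposition44 (T : finType) (x : semantics) (F F' : AF T) :
  wf_AF F -> wf_AF F' -> rm_exp F F' ->
  forall E : {set T}, sigma x F E ->
    exists E' : {set T}, sigma x F' E' /\ (~~ (E' \subset args F) \/ E' = E).
Proof.
move=> wfF wfF' Hrm E HE; exact: (main_sec wfF wfF' Hrm HE).
Qed.
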